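(* Consider the Disjoint Domination Game in which Dom is allowed to pass (in any turn except the very first move of the game) but Sepy is not allowed to pass. Then: (1) for every finite simple graph $G$ without isolated vertices, Dom has a winning strategy in the Sepy-start game on $G$; (2) for every finite simple graph $G$ without isolated vertices that has at least one Dom-win component, Dom has a winning strategy in the Dom-start game on $G$.
   Context: For a vertex $v$, $N[v]$ denotes its closed neighborhood. The Disjoint Domination Game on an isolate-free graph $G$ is played by Dom and Sepy with colors $p$ and $b$; $V_p,V_b$ denote the current sets of vertices of each color. Players alternate; either player may use either color. A move chooses a vertex $v$ and a color $c$ such that (i) $v$ is uncolored and (ii) some $u\in N[v]$ satisfies $N[u]\cap V_c=\emptyset$ (before the move); then $v$ gets color $c$. A player must make a legal move on his turn whenever one is available, unless he is the player allowed to pass (passing is never allowed on the first move of the game). The game ends as soon as either (s* ) some vertex $v$ has $N[v]\subseteq V_p$ or $N[v]\subseteq V_b$ — Sepy wins; or (d* ) both $V_p$ and $V_b$ are dominating sets of $G$ — Dom wins. In the Dom-start (Sepy-start) game Dom (Sepy) moves first. A Dom-win component of $G$ is a connected component $H$ of $G$ such that Dom has a winning strategy in the Dom-start Disjoint Domination Game (without passing) played on $H$ alone. *)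

(* Defs.v *)
From mathcomp Require Import all_boot.
Set Implicit Arguments. Unset Strict Implicit. Unset Printing Implicit Defensive.

Definition simple_graph (T : finType) (e : rel T) : Prop :=
  symmetric e /\ irreflexive e.

Definition isolate_free (T : finType) (e : rel T) : Prop :=
  forall v : T, exists u : T, e v u.

Section DisjointDominationGame.
Variables (T : finType) (e : rel T).

Definition cnbhd (v : T) : {set T} := [set u | (u == v) || e v u].

Definition dominating (D : {set T}) : bool :=
  [forall v, [exists u in D, u \in cnbhd v]].

Definition color_set (c : bool) (Vp Vb : {set T}) : {set T} :=
  if c then Vp else Vb.

Definition legal (Vp Vb : {set T}) (v : T) (c : bool) : bool :=
  (v \notin Vp :|: Vb) &&
  [exists u in cnbhd v, [disjoint cnbhd u & color_set c Vp Vb]].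

Definition play_p (Vp : {set T}) (v : T) (c : bool) : {set T} :=
  if c then v |: Vp else Vp.
Definition play_b (Vb : {set T}) (v : T) (c : bool) : {set T} :=
  if c then Vb else v |: Vb.

Definition sepy_end (Vp Vb : {set T}) : bool :=
  [exists v, (cnbhd v \subset Vp) || (cnbhd v \subset Vb)].
Definition dom_end (Vp Vb : {set T}) : bool :=
  dominating Vp && dominating Vb.
Definition ended (Vp Vb : {set T}) : bool := sepy_end Vp Vb || dom_end Vp Vb.

(* dom_wins dompass domturn first Vp Vb : Dom has a winning strategy from the
   position (Vp, Vb) where it is Dom's turn iff domturn, [first] says that
   this is the very first move of the game, and [dompass] says whether Dom
   is allowed to pass.  A player with no
   legal move available simply does not move (the turn goes over). *)
Inductive dom_wins (dompass : bool) : bool -> bool -> {set T} -> {set T} -> Prop :=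
| dw_end domturn first Vp Vb :
    dom_end Vp Vb -> ~~ sepy_end Vp Vb -> dom_wins dompass domturn first Vp Vb
| dw_move first Vp Vb v c :
    ~~ ended Vp Vb -> legal Vp Vb v c ->
    dom_wins dompass false false (play_p Vp v c) (play_b Vb v c) ->
    dom_wins dompass true first Vp Vb
| dw_pass Vp Vb :
    dompass -> ~~ ended Vp Vb ->
    dom_wins dompass false false Vp Vb ->
    dom_wins dompass true false Vp Vb
| dw_dom_stuck first Vp Vb :
    ~~ ended Vp Vb -> (forall v c, ~~ legal Vp Vb v c) ->
    dom_wins dompass false false Vp Vb ->
    dom_wins dompass true first Vp Vb
| dw_sepy first Vp Vb :
    ~~ ended Vp Vb -> (exists v c, legal Vp Vb v c) ->
    (forall v c, legal Vp Vb v c ->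
       dom_wins dompass true false (play_p Vp v c) (play_b Vb v c)) ->
    dom_wins dompass false first Vp Vb
| dw_sepy_stuck first Vp Vb :
    ~~ ended Vp Vb -> (forall v c, ~~ legal Vp Vb v c) ->
    dom_wins dompass true false Vp Vb ->
    dom_wins dompass false first Vp Vb.

Definition dom_start_win (dompass : bool) : Prop :=
  dom_wins dompass true true set0 set0.
Definition sepy_start_win (dompass : bool) : Prop :=
  dom_wins dompass false true set0 set0.

Definition is_component (C : {set T}) : Prop :=
  exists x : T, C = [set y | connect e x y].

End DisjointDominationGame.

Definition induced_rel (T : finType) (e : rel T) (C : {set T})
  : rel {x : T | x \in C} := fun x y => e (val x) (val y).
Arguments induced_rel {T} e C.

Definition dom_win_component (T : finType) (e : rel T) (C : {set T}) : Prop :=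
  is_component e C /\ dom_start_win (induced_rel e C) false.

(* Main.v *)
Require Import Defs.
From mathcomp Require Import all_boot.
From mathcomp Require Import zify.
Set Implicit Arguments. Unset Strict Implicit. Unset Printing Implicit Defensive.

Section Gen.
Variables (T : finType) (e : rel T).

Lemma meetP (A B : {set T}) :
  reflect (exists2 x, x \in A & x \in B) (~~ [disjoint A & B]).
Proof.
rewrite disjoint_subset; apply: (iffP subsetPn) => [[x a b]|[x a b]]; exists x => //.
  by move: b; rewrite inE negbK.
by rewrite inE negbK.
Qed.

Lemma in_cn u v : (u \in cnbhd e v) = (u == v) || e v u.
Proof. by rewrite inE. Qed.

Lemma cn_self v : v \in cnbhd e v.
Proof. by rewrite in_cn eqxx. Qed.

Definition safe (Vp Vb : {set T}) u := forall c, ~~ [disjoint cnbhd e u & color_set c Vp Vb].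

Lemma cs_play c d (Vp Vb : {set T}) v :
  color_set d (play_p Vp v c) (play_b Vb v c) =
  if d == c then v |: color_set d Vp Vb else color_set d Vp Vb.
Proof. by case: c; case: d. Qed.

Lemma play_U c (Vp Vb : {set T}) v :
  play_p Vp v c :|: play_b Vb v c = v |: (Vp :|: Vb).
Proof. by case: c; rewrite /= ?setUA // -setUA setUCA setUA. Qed.

Lemma cs_sub c d (Vp Vb : {set T}) v :
  color_set d Vp Vb \subset color_set d (play_p Vp v c) (play_b Vb v c).
Proof. rewrite cs_play; case: eqP => _ //; exact: subsetUr. Qed.

Lemma safe_play (Vp Vb : {set T}) v c u : safe Vp Vb u ->
  safe (play_p Vp v c) (play_b Vb v c) u.
Proof.
move=> H d; have /meetP[x a b] := H d; apply/meetP; exists x => //.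
exact: (subsetP (cs_sub c d Vp Vb v)).
Qed.

Lemma sepy_endP (Vp Vb : {set T}) :
  reflect (exists v c, cnbhd e v \subset color_set c Vp Vb) (sepy_end e Vp Vb).
Proof.
apply: (iffP existsP) => [[v /orP[H|H]]|[v [[] H]]].
- by exists v, true.
- by exists v, false.
- by exists v; rewrite H.
- by exists v; rewrite H orbT.
Qed.

Lemma dominatingP (D : {set T}) :
  reflect (forall v, ~~ [disjoint cnbhd e v & D]) (dominating e D).
Proof.
apply: (iffP forallP) => H v.
  have /existsP[u /andP[a b]] := H v; apply/meetP; by exists u.
have /meetP[u a b] := H v; apply/existsP; exists u; by rewrite a b.
Qed.

Lemma dom_endP (Vp Vb : {set T}) :
  reflect (forall v c, ~~ [disjoint cnbhd e v & color_set c Vp Vb]) (dom_end e Vp Vb).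
Proof.
apply: (iffP andP) => [[/dominatingP H1 /dominatingP H2] v [] //|H].
by split; apply/dominatingP => v; [exact: (H v true)|exact: (H v false)].
Qed.

Lemma cs_disj c (Vp Vb : {set T}) : [disjoint Vp & Vb] ->
  [disjoint color_set c Vp Vb & color_set (~~ c) Vp Vb].
Proof. by case: c => //=; rewrite disjoint_sym. Qed.

Lemma cs_cover c (Vp Vb : {set T}) x : x \in Vp :|: Vb -> x \notin color_set c Vp Vb ->
  x \in color_set (~~ c) Vp Vb.
Proof. by case: c => /=; case/setUP => ->. Qed.

Hypothesis se : symmetric e.

Lemma cn_sym u v : (u \in cnbhd e v) = (v \in cnbhd e u).
Proof. by rewrite !in_cn eq_sym se. Qed.

Lemma exists_legal (Vp Vb : {set T}) : ~~ ended e Vp Vb -> exists v c, legal e Vp Vb v c.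
Proof.
rewrite /ended negb_or => /andP[ns nd].
have : [exists u, [exists c, [disjoint cnbhd e u & color_set c Vp Vb]]].
  apply: contraR nd; rewrite negb_exists => /forallP H; apply/dom_endP => v c.
  by move: (H v); rewrite negb_exists => /forallP/(_ c).
case/existsP => u /existsP [c Hd].
case: (boolP [exists v in cnbhd e u, v \notin Vp :|: Vb]).
  case/existsP => v /andP[vu vn]; exists v, c; rewrite /legal vn /=.
  by apply/existsP; exists u; rewrite -cn_sym vu.
rewrite negb_exists => /forallP H; case/sepy_endP: ns.
exists u, (~~ c); apply/subsetP => x xu.
have := H x; rewrite xu negbK /= => xc; apply: cs_cover => //.
by rewrite (disjointFr Hd xu).
Qed.

Hypothesis nie : isolate_free e.

Hypothesis ie : irreflexive e.

Lemma cs_in d (Vp Vb : {set T}) x : x \in color_set d Vp Vb -> x \in Vp :|: Vb.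
Proof. by case: d => /= H; rewrite inE H ?orbT. Qed.

Lemma cs_out c (A B : {set T}) x : x \notin color_set c A B ->
  x \notin color_set (~~ c) A B -> x \notin A :|: B.
Proof. by case: c => /=; rewrite inE => /negbTE-> /negbTE->. Qed.

Lemma legal_nmono (Vp Vb : {set T}) w c d : legal e Vp Vb w c ->
  ~~ (cnbhd e w \subset color_set d (play_p Vp w c) (play_b Vb w c)).
Proof.
case/andP => wn /existsP[x /andP[xw Hx]]; apply/negP => Hs.
have wd := subsetP Hs _ (cn_self w).
have dc : d = c.
  move: wd; rewrite cs_play; case: eqP => // _ /cs_in wd.
  by rewrite wd in wn.
move: Hs; rewrite dc cs_play eqxx => Hs.
have inV y : y \in cnbhd e w -> y != w -> y \in color_set c Vp Vb.
  by move=> /(subsetP Hs); rewrite in_setU1 => /orP[/eqP->|]; [rewrite eqxx|].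
case: (eqVneq x w) => [xw'|xnw].
  subst x; have [y ey] := nie w.
  have yw : y != w by apply/eqP=> E; subst; by rewrite ie in ey.
  have yin : y \in cnbhd e w by rewrite in_cn ey orbT.
  by have := inV y yin yw; rewrite (disjointFr Hx yin).
by have := inV x xw xnw; rewrite (disjointFr Hx (cn_self x)).
Qed.

Lemma card_play (S : {set T}) v : v \notin S -> #|~: (v |: S)| < #|~: S|.
Proof.
move=> vS; have h1 := cardsC (v |: S); have h2 := cardsC S.
have h3 := cardsU1 v S; rewrite vS /= in h3; have h4 := max_card (mem (v |: S)).
rewrite h3 in h1 h4; apply/leP; move/leP: h4 => h4; lia.
Qed.

Lemma disj_play (Vp Vb : {set T}) w c : [disjoint Vp & Vb] -> w \notin Vp :|: Vb ->
  [disjoint play_p Vp w c & play_b Vb w c].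
Proof.
move=> D wn.
have hx x : x \in Vp -> x \in Vb -> False by move=> a b; rewrite (disjointFr D a) in b.
rewrite inE negb_or in wn; case/andP: wn => wp wb.
rewrite -setI_eq0; apply/eqP/setP => x; rewrite inE in_set0; apply/negP => /andP[].
case: c => /=; rewrite ?in_setU1.
  by case/orP => [/eqP->|a] b; [rewrite b in wb | exact: hx a b].
by move=> a /orP[/eqP xw|b]; [subst x; rewrite a in wp | exact: hx a b].
Qed.

Lemma nsub_safe (Vp Vb : {set T}) v d : [disjoint Vp & Vb] -> safe Vp Vb v ->
  ~~ (cnbhd e v \subset color_set d Vp Vb).
Proof.
move=> D /(_ (~~ d)) /meetP[x xv xd]; apply/negP => /subsetP/(_ x xv) xd'.
by have := disjointFr (cs_disj d D) xd'; rewrite xd.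
Qed.

Lemma safe_of (Vp Vb : {set T}) u x y c : x \in cnbhd e u -> y \in cnbhd e u ->
  x \in color_set c Vp Vb -> y \in color_set (~~ c) Vp Vb -> safe Vp Vb u.
Proof.
move=> xu yu xc yc d; apply/meetP; case: (eqVneq d c) => [->|dc]; first by exists x.
by exists y => //; rewrite (_ : d = ~~ c) //; clear -dc; move: dc; case: d; case: c.
Qed.

Lemma respond (Vp Vb : {set T}) w c : [disjoint Vp & Vb] -> legal e Vp Vb w c ->
  let Vp' := play_p Vp w c in let Vb' := play_b Vb w c in
  safe Vp' Vb' w \/
  exists z, [/\ z \in cnbhd e w, legal e Vp' Vb' z (~~ c),
     safe (play_p Vp' z (~~ c)) (play_b Vb' z (~~ c)) w &
     safe (play_p Vp' z (~~ c)) (play_b Vb' z (~~ c)) z].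
Proof.
move=> D L Vp' Vb'.
have wc : w \in color_set c Vp' Vb' by rewrite /Vp' /Vb' cs_play eqxx setU11.
case: (boolP [disjoint cnbhd e w & color_set (~~ c) Vp' Vb']) => Dw; last first.
  by left; move/meetP: Dw => [y yw yc]; apply: (safe_of (cn_self w) yw wc yc).
right; have /subsetPn[z zw zc] := legal_nmono c L.
have zc' : z \notin color_set (~~ c) Vp' Vb' by rewrite (disjointFr Dw zw).
have zn : z \notin Vp' :|: Vb'.
  by apply: cs_out zc zc'.
have Lz : legal e Vp' Vb' z (~~ c).
  by rewrite /legal zn /=; apply/existsP; exists w; rewrite -cn_sym zw Dw.
exists z; split => //.
- apply: (safe_of (cn_self w) zw (c := c)).
    by apply: (subsetP (cs_sub _ _ _ _ _)).
  by rewrite cs_play eqxx setU11.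
- apply: (safe_of (x := w) _ (cn_self z) (c := c)); first by rewrite cn_sym.
    by apply: (subsetP (cs_sub _ _ _ _ _)).
  by rewrite cs_play eqxx setU11.
Qed.

Definition outinv (C Vp Vb : {set T}) :=
  [disjoint Vp & Vb] /\ forall u, u \notin C -> u \in Vp :|: Vb -> safe Vp Vb u.

Lemma legal_un (Vp Vb : {set T}) w c : legal e Vp Vb w c -> w \notin Vp :|: Vb.
Proof. by case/andP. Qed.

Lemma outinv_play (C Vp Vb : {set T}) w c : outinv C Vp Vb -> w \notin Vp :|: Vb ->
  (w \notin C -> safe (play_p Vp w c) (play_b Vb w c) w) ->
  outinv C (play_p Vp w c) (play_b Vb w c).
Proof.
move=> [D H] wn Hw; split; first exact: disj_play.
move=> u uC; rewrite play_U in_setU1 => /orP[/eqP uw|uc].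
  by subst u; apply: Hw.
exact/safe_play/H.
Qed.

Lemma outinv_play2 (C Vp Vb : {set T}) w c z d : outinv C Vp Vb -> w \notin Vp :|: Vb ->
  let Vp' := play_p Vp w c in let Vb' := play_b Vb w c in
  z \notin Vp' :|: Vb' ->
  safe (play_p Vp' z d) (play_b Vb' z d) w -> safe (play_p Vp' z d) (play_b Vb' z d) z ->
  outinv C (play_p Vp' z d) (play_b Vb' z d).
Proof.
move=> [D H] wn Vp' Vb' zn Sw Sz; split; first by apply: disj_play => //; apply: disj_play.
move=> u uC; rewrite play_U in_setU1 => /orP[/eqP uz|]; first by subst u.
rewrite play_U in_setU1 => /orP[/eqP uw|uc]; first by subst u.
exact/safe_play/safe_play/H.
Qed.

Lemma nsep_gen (C Vp Vb : {set T}) :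
  (forall u c, u \in C -> ~~ (cnbhd e u \subset color_set c Vp Vb)) ->
  outinv C Vp Vb -> ~~ sepy_end e Vp Vb.
Proof.
move=> HQs [D H]; apply/sepy_endP => [[v [d Hv]]].
case: (boolP (v \in C)) => vC; first by move: (HQs v d vC); rewrite Hv.
case: (boolP (v \in Vp :|: Vb)) => vc.
  by move: (nsub_safe d D (H v vC vc)); rewrite Hv.
by move: vc; rewrite (cs_in (subsetP Hv _ (cn_self v))).
Qed.

Lemma inner (C : {set T}) (Q : {set T} -> {set T} -> Prop) :
  (forall x y, x \in C -> e x y -> y \in C) ->
  (forall Vp Vb, Q Vp Vb -> forall u c, u \in C -> ~~ (cnbhd e u \subset color_set c Vp Vb)) ->
  (forall Vp Vb w c, Q Vp Vb -> w \notin C -> Q (play_p Vp w c) (play_b Vb w c)) ->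
  (forall Vp Vb w c, Q Vp Vb -> outinv C Vp Vb -> w \in C -> legal e Vp Vb w c ->
      dom_wins e true true false (play_p Vp w c) (play_b Vb w c)) ->
  forall Vp Vb first, Q Vp Vb -> outinv C Vp Vb -> dom_wins e true false first Vp Vb.
Proof.
move=> Ccl HQs HQp HC Vp Vb.
have [n] := ubnP #|~: (Vp :|: Vb)|; elim: n Vp Vb => // n IH Vp Vb lt first QV OI.
have nsep : forall Vp Vb, Q Vp Vb -> outinv C Vp Vb -> ~~ sepy_end e Vp Vb.
  move=> A B QA [D H]; apply/sepy_endP => [[v [d Hv]]].
  case: (boolP (v \in C)) => vC; first by move: (HQs _ _ QA v d vC); rewrite Hv.
  case: (boolP (v \in A :|: B)) => vc.
    by move: (nsub_safe d D (H v vC vc)); rewrite Hv.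
  by move: vc; rewrite (cs_in (subsetP Hv _ (cn_self v))).
case: (boolP (dom_end e Vp Vb)) => de; first by apply: dw_end => //; apply: nsep.
have ne : ~~ ended e Vp Vb by rewrite /ended negb_or nsep.
apply: dw_sepy => //; first exact: exists_legal.
move=> w c L.
case: (boolP (w \in C)) => wC; first exact: HC.
have wn := legal_un L.
have D := OI.1.
set Vp' := play_p Vp w c; set Vb' := play_b Vb w c.
have Q' : Q Vp' Vb' by apply: HQp.
have lt' : #|~: (Vp' :|: Vb')| < n by rewrite play_U; apply: leq_trans (card_play wn) _.
have ns' : ~~ sepy_end e Vp' Vb'.
  apply/sepy_endP => [[v [d Hv]]].
  case: (boolP (v \in C)) => vC; first by move: (HQs _ _ Q' v d vC); rewrite Hv.
  case: (eqVneq v w) => [vw|vw]; first by subst v; move: (legal_nmono d L); rewrite Hv.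
  case: (boolP (v \in Vp :|: Vb)) => vc.
    by move: (nsub_safe d (disj_play c D wn) (safe_play w c (OI.2 v vC vc))); rewrite Hv.
  have := cs_in (subsetP Hv _ (cn_self v)); rewrite play_U in_setU1 (negbTE vw) /=.
  by rewrite (negbTE vc).
case: (boolP (dom_end e Vp' Vb')) => de'; first by apply: dw_end.
have ne' : ~~ ended e Vp' Vb' by rewrite /ended negb_or ns'.
case: (respond D L) => [Sw|[z [zw Lz Sw Sz]]].
  apply: dw_pass => //; apply: IH => //; apply: outinv_play => //.
have zC : z \notin C.
  apply/negP => zC; move: zw; rewrite in_cn => /orP[/eqP zw|ewz].
    by subst; rewrite zC in wC.
  have := Ccl z w zC; rewrite se ewz => /(_ isT) wC'; by rewrite wC' in wC.
eapply dw_move; [exact: ne' | exact: Lz | ]; apply: IH.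
- by rewrite play_U; apply: leq_trans (card_play (legal_un Lz)) _; apply: ltnW.
- by apply: HQp.
- exact: outinv_play2 OI wn (legal_un Lz) Sw Sz.
Qed.

Lemma part1_gen (Vp Vb : {set T}) (dt first : bool) : outinv set0 Vp Vb -> (dt -> first = false) ->
  dom_wins e true dt first Vp Vb.
Proof.
move=> OI Hf.
have I : forall Vp Vb first, True -> outinv set0 Vp Vb -> dom_wins e true false first Vp Vb.
  by apply: inner => //= [x y|A B _ u c|A B w c _ _]; rewrite inE.
case: dt Hf => [/(_ isT) ->|_]; last exact: I.
have ns : ~~ sepy_end e Vp Vb by apply: (nsep_gen (C := set0)) => // u c; rewrite inE.
case: (boolP (dom_end e Vp Vb)) => de; first by apply: dw_end.
apply: dw_pass => //; first by rewrite /ended negb_or ns.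
exact: I.
Qed.

End Gen.

Section Comp.
Variables (T : finType) (e : rel T).
Hypotheses (se : symmetric e) (nie : isolate_free e) (ie : irreflexive e).
Variables (C : {set T}) (x0 : T).
Hypothesis HCd : C = [set y | connect e x0 y].

Local Notation sub := {x : T | x \in C}.
Local Notation ec := (induced_rel e C).

Definition res (S : {set T}) : {set sub} := [set y | val y \in S].

Lemma Ccl x y : x \in C -> e x y -> y \in C.
Proof.
rewrite HCd !inE => cx exy; apply: connect_trans cx _; exact: connect1.
Qed.

Lemma x0C : x0 \in C.
Proof. by rewrite HCd inE connect0. Qed.

Lemma sec : symmetric ec.
Proof. by move=> x y; rewrite /induced_rel se. Qed.

Lemma cnC (u : sub) : cnbhd e (val u) \subset C.
Proof.
apply/subsetP => y; rewrite in_cn => /orP[/eqP->|]; first exact: valP.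
exact: Ccl (valP u).
Qed.

Lemma T2 (u y : sub) : (y \in cnbhd ec u) = (val y \in cnbhd e (val u)).
Proof. by rewrite !in_cn. Qed.

Lemma T3 (u : sub) (S : {set T}) :
  [disjoint cnbhd ec u & res S] = [disjoint cnbhd e (val u) & S].
Proof.
apply/idP/idP => H; apply: contraTT H => /meetP[y yu yS]; apply/meetP.
  have yC := subsetP (cnC u) y yu.
  exists (Sub y yC). rewrite T2 SubK //. rewrite inE SubK //.
by exists (val y); rewrite -?T2 //; move: yS; rewrite inE.
Qed.

Lemma T4 (u : sub) (S : {set T}) :
  (cnbhd ec u \subset res S) = (cnbhd e (val u) \subset S).
Proof.
apply/idP/idP => /subsetP H; apply/subsetP => y yu.
  have yC := subsetP (cnC u) y yu.
  by have := H (Sub y yC); rewrite T2 SubK => /(_ yu); rewrite inE SubK.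
by rewrite inE; apply: H; rewrite -T2.
Qed.

Lemma res_cs c Vp Vb : color_set c (res Vp) (res Vb) = res (color_set c Vp Vb).
Proof. by case: c. Qed.

Lemma res_play_p Vp (v : sub) c : res (play_p Vp (val v) c) = play_p (res Vp) v c.
Proof. by case: c => //=; apply/setP => y; rewrite !inE. Qed.

Lemma res_play_b Vb (v : sub) c : res (play_b Vb (val v) c) = play_b (res Vb) v c.
Proof. by case: c => //=; apply/setP => y; rewrite !inE. Qed.

Lemma res_play_out S w c (b : bool) : w \notin C ->
  res (if b then play_p S w c else play_b S w c) = res S.
Proof.
move=> wC; apply/setP => y; case: b; case: c; rewrite /= !inE //;
  case: eqP => // yw; by move: (valP y); rewrite yw (negbTE wC).
Qed.

Lemma legal_res Vp Vb (v : sub) c :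
  legal ec (res Vp) (res Vb) v c = legal e Vp Vb (val v) c.
Proof.
rewrite /legal !inE; congr (_ && _).
apply/existsP/existsP => [[u /andP[uv Hu]]|[u /andP[uv Hu]]].
  by exists (val u); rewrite -T2 uv /= -T3 -res_cs.
have uC := subsetP (cnC v) u uv.
by exists (Sub u uC); rewrite T2 /= uv /= res_cs T3.
Qed.

Lemma dom_end_res Vp Vb : dom_end ec (res Vp) (res Vb) ->
  forall u, u \in C -> safe e Vp Vb u.
Proof.
move=> /dom_endP H u uC c; have := H (Sub u uC) c; by rewrite res_cs T3.
Qed.

Lemma dom_end_T Vp Vb : dom_end e Vp Vb -> dom_end ec (res Vp) (res Vb).
Proof.
move=> /dom_endP H; apply/dom_endP => u c; by rewrite res_cs T3.
Qed.

Lemma nsep_res Vp Vb : ~~ sepy_end ec (res Vp) (res Vb) ->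
  forall u c, u \in C -> ~~ (cnbhd e u \subset color_set c Vp Vb).
Proof.
move=> ns u c uC; apply/negP => Hs; case/negP: ns; apply/sepy_endP.
by exists (Sub u uC), c; rewrite res_cs T4.
Qed.

Lemma neC_ns P B : ~~ ended ec P B -> ~~ sepy_end ec P B.
Proof. by rewrite /ended negb_or => /andP[]. Qed.

Lemma comb dt first P B : dom_wins ec false dt first P B ->
  forall Vp Vb, res Vp = P -> res Vb = B -> outinv e C Vp Vb ->
  (first -> dt -> ~~ dom_end ec P B) -> dom_wins e true dt first Vp Vb.
Proof.
elim => {dt first P B}.
- move=> dt first P B de nse Vp Vb eP eB [D OI] Hf.
  have OI0 : outinv e set0 Vp Vb.
    split => // u _ uc; case: (boolP (u \in C)) => uC; last exact: OI.
    by apply: dom_end_res => //; rewrite eP eB.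
  apply: part1_gen => // dtt; case: (first) Hf => // /(_ isT dtt); by rewrite de.
- move=> first P B v c neC LC D' IH Vp Vb eP eB OI Hf.
  have ns : ~~ sepy_end e Vp Vb.
    apply: (nsep_gen (C := C)) => //; apply: nsep_res; rewrite eP eB; exact: neC_ns.
  have nd : ~~ dom_end e Vp Vb.
    apply: contra neC => /dom_end_T; rewrite eP eB /ended => ->; by rewrite orbT.
  have L : legal e Vp Vb (val v) c by rewrite -legal_res eP eB.
  eapply dw_move; [by rewrite /ended negb_or ns | exact: L | ].
  apply: IH => //; first by rewrite res_play_p eP.
    by rewrite res_play_b eB.
  apply: outinv_play => //; first exact: legal_un L.
  by rewrite (valP v).
- by [].
- move=> first P B neC nl _ _ Vp Vb *; have [v [c L]] := exists_legal sec neC.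
  by rewrite (negbTE (nl v c)) in L.
- move=> first P B neC _ HL IH Vp Vb eP eB OI Hf.
  apply: (inner se nie ie (C := C) (Q := fun A B' => res A = P /\ res B' = B)) => //.
  + exact: Ccl.
  + move=> A B' [eA eB'] u c uC; apply: nsep_res => //; rewrite eA eB'; exact: neC_ns.
  + move=> A B' w c [eA eB'] wC; split.
      by rewrite (res_play_out _ c true).
    by rewrite (res_play_out _ c false).
  + move=> A B' w c [eA eB'] OIA wC L.
    have L' : legal ec P B (Sub w wC) c by rewrite -eA -eB' legal_res SubK.
    apply: (IH _ _ L') => //.
    * by rewrite -eA -res_play_p SubK.
    * by rewrite -eB' -res_play_b SubK.
    * apply: outinv_play => //; first exact: legal_un L.
      by rewrite wC.
- move=> first P B neC nl _ _ Vp Vb *; have [v [c L]] := exists_legal sec neC.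
  by rewrite (negbTE (nl v c)) in L.
Qed.

Lemma part2 : dom_start_win ec false -> dom_start_win e true.
Proof.
move=> H; apply: (comb H) => //.
- by apply/setP => y; rewrite !inE.
- by apply/setP => y; rewrite !inE.
- by split; [rewrite -setI_eq0 set0I | move=> u _; rewrite setU0 inE].
- move=> _ _; apply/negP => /dom_endP/(_ (Sub x0 x0C) true) /meetP[y _]; by rewrite inE.
Qed.

End Comp.

Theorem mainTheorem7 :
  forall (T : finType) (e : rel T),
    simple_graph e -> isolate_free e ->
    sepy_start_win e true /\
    ((exists C : {set T}, dom_win_component e C) -> dom_start_win e true).
Proof.
move=> T e [se ie] nie; split.
  apply: part1_gen => //; split; first by rewrite -setI_eq0 set0I.
  by move=> u _; rewrite setU0 inE.
move=> [C [[x0 HC] W]]; exact: (part2 se nie ie HC W).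
Qed.
Print Assumptions mainTheorem7.
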